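(* Let $\varphi:\mathbb N\to(0,\infty)$ be nonincreasing with $\lim_{n\to\infty}\varphi(n)=0$ and $\lim_{n\to\infty}n\varphi(n)=\infty$. Then there exists a nondecreasing function $\xi:\mathbb N\to\mathbb N$ with $\lim_{n\to\infty}\xi(n)=\infty$ such that for all sufficiently large $n$, $\varphi(1)\le\xi(n)\,\varphi(n\xi(n))\le2\varphi(1)$. *)

(* Defs.v *)
From Stdlib Require Import Reals Lra Lia.
Open Scope R_scope.

(* Main.v *)
Require Import Defs.
From Stdlib Require Import Reals Lra Lia.
From Stdlib Require Import Classical ClassicalEpsilon.
Open Scope R_scope.

Lemma least_ex (P : nat -> Prop) :
  (exists k, P k) -> exists k, P k /\ forall j, P j -> (k <= j)%nat.
Proof.
  intros [k Hk]. revert Hk.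
  induction k as [k IH] using (well_founded_induction Wf_nat.lt_wf).
  intros Hk.
  destruct (classic (exists j, P j /\ (j < k)%nat)) as [[j [Hj Hjk]]|Hn].
  - apply (IH j Hjk Hj).
  - exists k; split; auto. intros j Hj.
    destruct (Nat.le_gt_cases k j); auto. exfalso; apply Hn; eauto.
Qed.

(* N = {1,2,...}: hypotheses on phi only on n >= 1. *)
Theorem lemma4p2 (phi : nat -> R)
  (Hpos : forall n : nat, (1 <= n)%nat -> 0 < phi n)
  (Hmono : forall m n : nat, (1 <= m)%nat -> (m <= n)%nat -> phi n <= phi m)
  (Hlim0 : Un_cv phi 0)
  (Hlim_inf : cv_infty (fun n => INR n * phi n)) :
  exists xi : nat -> nat,
    (forall m n : nat, (m <= n)%nat -> (xi m <= xi n)%nat) /\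
    (forall M : nat, exists N : nat, forall n : nat, (N <= n)%nat -> (M <= xi n)%nat) /\
    (exists N : nat, forall n : nat, (N <= n)%nat ->
       phi 1%nat <= INR (xi n) * phi (n * xi n)%nat <= 2 * phi 1%nat).
Proof.
  set (c := phi 1%nat).
  assert (Hc : 0 < c) by (apply Hpos; lia).
  set (P := fun n k => (1 <= k)%nat /\ c <= INR k * phi (n * k)%nat).
  assert (Hex : forall n, exists k, (n = 0%nat -> k = 0%nat) /\
     ((1 <= n)%nat -> P n k /\ forall j, P n j -> (k <= j)%nat)).
  { intros [|n].
    - exists 0%nat; split; intros; [auto | lia].
    - destruct (least_ex (P (S n))) as [k [Hk Hmin]].
      + destruct (Hlim_inf (INR (S n) * c)) as [N HN].
        exists (S N). split; [lia|].
        assert (HNm : (N <= S n * S N)%nat) by nia.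
        specialize (HN _ HNm). cbv beta in HN. rewrite mult_INR in HN.
        assert (HSn : 0 < INR (S n)) by (apply lt_0_INR; lia).
        apply Rlt_le. apply (Rmult_lt_reg_l (INR (S n))); auto.
        rewrite <- Rmult_assoc. exact HN.
      + exists k; split; [lia| intros; auto]. }
  set (xi := fun n => proj1_sig (constructive_indefinite_description _ (Hex n))).
  assert (Hxi : forall n, (n = 0%nat -> xi n = 0%nat) /\
     ((1 <= n)%nat -> P n (xi n) /\ forall j, P n j -> (xi n <= j)%nat)).
  { intro n. exact (proj2_sig (constructive_indefinite_description _ (Hex n))). }
  exists xi. split; [|split].
  - intros m n Hmn. destruct m as [|m].
    + rewrite (proj1 (Hxi 0%nat) eq_refl). lia.
    + destruct (proj2 (Hxi (S n - 0)%nat)) as [_ _]; [lia|].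
      destruct (proj2 (Hxi n)) as [[H1 H2] _]; [lia|].
      apply (proj2 (proj2 (Hxi (S m)) ltac:(lia))).
      split; auto. eapply Rle_trans; [exact H2|].
      apply Rmult_le_compat_l; [apply pos_INR|]. apply Hmono; nia.
  - intros M. destruct M as [|M]. { exists 0%nat; intros; lia. }
    assert (HM : 0 < INR (S M)) by (apply lt_0_INR; lia).
    destruct (Hlim0 (c / INR (S M))) as [N0 HN0].
    { apply Rdiv_lt_0_compat; auto. }
    exists (S N0). intros n Hn.
    destruct (Nat.le_gt_cases (S M) (xi n)) as [H|H]; auto. exfalso.
    destruct (proj2 (Hxi n)) as [[H1 H2] _]; [lia|].
    assert (Hp := HN0 (n * xi n)%nat ltac:(nia)).
    unfold R_dist in Hp. rewrite Rminus_0_r in Hp.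
    assert (Hpp : 0 < phi (n * xi n)%nat) by (apply Hpos; nia).
    rewrite Rabs_right in Hp by lra.
    assert (Hk : INR (xi n) <= INR (S M)) by (apply le_INR; lia).
    assert (INR (xi n) * phi (n * xi n)%nat <= INR (S M) * phi (n * xi n)%nat)
      by (apply Rmult_le_compat_r; lra).
    assert (INR (S M) * phi (n * xi n)%nat < INR (S M) * (c / INR (S M)))
      by (apply Rmult_lt_compat_l; auto).
    assert (INR (S M) * (c / INR (S M)) = c) by (field; lra).
    lra.
  - destruct (Hlim0 c Hc) as [N0 HN0].
    exists (S N0). intros n Hn.
    destruct (Hxi n) as [_ Hx]. destruct (Hx ltac:(lia)) as [[H1 H2] Hmin].
    fold c. split; auto.
    destruct (xi n) as [|k] eqn:E; [lia|].
    destruct k as [|k].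
    + exfalso. assert (Hp := HN0 n ltac:(lia)).
      unfold R_dist in Hp. rewrite Rminus_0_r in Hp.
      assert (Hpp : 0 < phi n) by (apply Hpos; lia).
      rewrite Rabs_right in Hp by lra.
      rewrite Nat.mul_1_r in H2. simpl in H2. lra.
    + assert (Hnot : ~ P n (S k)).
      { intro HP. specialize (Hmin _ HP). lia. }
      assert (Hlt : INR (S k) * phi (n * S k)%nat < c).
      { destruct (Rlt_le_dec (INR (S k) * phi (n * S k)%nat) c); auto.
        exfalso; apply Hnot; split; [lia|auto]. }
      assert (Hm1 : phi (n * S (S k))%nat <= phi (n * S k)%nat) by (apply Hmono; nia).
      assert (Hm2 : phi (n * S (S k))%nat <= c) by (apply Hmono; nia).
      assert (Hpp : 0 < phi (n * S (S k))%nat) by (apply Hpos; nia).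
      rewrite S_INR.
      assert (INR (S k) * phi (n * S (S k))%nat <= INR (S k) * phi (n * S k)%nat)
        by (apply Rmult_le_compat_l; [apply pos_INR|auto]).
      lra.
Qed.
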